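(* Let $\tau$ be a Euclidean triangle with edge lengths $\ell_1,\ell_2,\ell_3$ and interior angles $\alpha_1,\alpha_2,\alpha_3$ (the angle $\alpha_i$ opposite the edge of length $\ell_i$). The following are equivalent: (i) $\tau$ is generic, i.e. for some real $k>0$ the numbers $k\ell_1,k\ell_2,k\ell_3$ are algebraically independent over $\mathbb{Q}$; (s) for some (hence almost every) $k\in\mathbb{R}$ the numbers $k\sin\alpha_1,k\sin\alpha_2,k\sin\alpha_3$ are algebraically independent over $\mathbb{Q}$; (c) for some (hence almost every) $k\in\mathbb{R}$ the numbers $k\cos\alpha_1,k\cos\alpha_2,k\cos\alpha_3$ are algebraically independent over $\mathbb{Q}$.
   Context: Real numbers $a_1,a_2,a_3$ are algebraically independent over $\mathbb{Q}$ if there is no nonzero polynomial $p\in\mathbb{Z}[x_1,x_2,x_3]$ with $p(a_1,a_2,a_3)=0$. *)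

(* Defs.v *)
From mathcomp Require Import all_boot all_algebra.
From mathcomp Require Import Rstruct.
From mathcomp Require Import mpoly.
From Stdlib Require Import Reals.
Import GRing.Theory.
Local Open Scope ring_scope.


Definition evalZ3 (p : {mpoly int[3]}) (a1 a2 a3 : R) : R :=
  (map_mpoly (fun z : int => (z%:~R : R)%R) p).@[fun i : 'I_3 => nth 0 [:: a1; a2; a3] i].

(* a1,a2,a3 are algebraically independent over Q: no nonzero p in Z[x1,x2,x3]
   vanishes at (a1,a2,a3). *)
Definition alg_indep3 (a1 a2 a3 : R) : Prop :=
  forall p : {mpoly int[3]}, p != 0 -> evalZ3 p a1 a2 a3 <> 0.

Local Open Scope R_scope.

Definition point := (R * R)%type.

Definition seglen (P Q : point) : R :=
  sqrt ((fst Q - fst P) ^ 2 + (snd Q - snd P) ^ 2).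

Definition noncollinear (A B C : point) : Prop :=
  (fst B - fst A) * (snd C - snd A) - (snd B - snd A) * (fst C - fst A) <> 0.

Definition angle_at (A B C : point) : R :=
  acos (((fst B - fst A) * (fst C - fst A) + (snd B - snd A) * (snd C - snd A))
        / (seglen A B * seglen A C)).

(* S is a Lebesgue-null subset of R: for every eps > 0 it is covered by
   countably many open intervals of total length at most eps. *)
Definition null_set (S : R -> Prop) : Prop :=
  forall eps : R, 0 < eps ->
    exists a b : nat -> R,
      (forall n, a n <= b n) /\
      (forall x, S x -> exists n, a n < x < b n) /\
      (forall N, sum_f_R0 (fun n => b n - a n) N <= eps).

(* Main.v *)
Require Import Defs.
From mathcomp Require Import all_boot all_order all_algebra.
From mathcomp Require Import Rstruct.
From mathcomp Require Import mpoly.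
From Stdlib Require Import Reals.
From mathcomp Require Import zify.
From Stdlib Require Import Classical ClassicalEpsilon Lra.
Set Implicit Arguments.
Unset Strict Implicit.
Unset Printing Implicit Defensive.
Import Order.TTheory GRing.Theory Num.Theory.
Local Open Scope ring_scope.
Definition vec3 (a1 a2 a3 : R) : 'I_3 -> R := fun i => nth 0 [:: a1; a2; a3] i.

Lemma evalZ3E p a1 a2 a3 : evalZ3 p a1 a2 a3 = (map_mpoly intr p).@[vec3 a1 a2 a3].
Proof. by []. Qed.

Lemma evalZ3_comp (p : {mpoly int[3]}) (f : 3.-tuple {mpoly int[3]}) a1 a2 a3 :
  evalZ3 (p \mPo f) a1 a2 a3 =
  evalZ3 p (evalZ3 (tnth f 0) a1 a2 a3) (evalZ3 (tnth f 1) a1 a2 a3) (evalZ3 (tnth f 2) a1 a2 a3).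
Proof.
rewrite !evalZ3E map_mpoly_comp; last exact: intr_inj.
rewrite comp_mpoly_meval; apply: meval_eq => i.
rewrite tnth_map.
by case: i => [[|[|[|]]] Hi] //=; rewrite /vec3 /=; congr (_.@[_]); congr (map_mpoly _ (tnth _ _)); apply/val_inj.
Qed.
Lemma seq_max (T : eqType) (s : seq T) (h : T -> 'X_{1..3}) x0 :
  x0 \in s -> exists2 M, M \in s & forall m, m \in s -> (h m <= h M)%O.
Proof.
elim: s x0 => [//|a s IH] x0 _.
case: s IH => [|b s] IH.
  by exists a; rewrite ?mem_head // => m; rewrite inE => /eqP ->.
have [M Ms HM] := IH b (mem_head _ _).
case: (leP (h a) (h M)) => [le|lt].
  exists M; first by rewrite inE Ms orbT.
  by move=> m; rewrite inE => /orP[/eqP ->|]; [|apply: HM].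
exists a; first exact: mem_head.
move=> m; rewrite inE => /orP[/eqP ->//|/HM hm].
exact: le_trans hm (ltW lt).
Qed.

Section CompNeq0.
Variable f : 3.-tuple {mpoly int[3]}.
Hypothesis fnz : forall i, tnth f i != 0.
Let g (m : 'X_{1..3}) : 'X_{1..3} := (\sum_(i < 3) (mlead (tnth f i) *+ m i))%MM.
Hypothesis ginj : injective g.
Let F (m : 'X_{1..3}) : {mpoly int[3]} := \prod_(i < 3) tnth f i ^+ m i.

Lemma lreg_nz (c : int) : c != 0 -> GRing.lreg c.
Proof. by move=> hc; apply: mulfI. Qed.

Lemma F_mlead m : (mlead (F m) <= g m)%O.
Proof.
apply: le_trans (mlead_prod_le _ _ _) _.
rewrite le_eqVlt; apply/orP; left; apply/eqP.
rewrite /g; apply: eq_bigr => i _.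
by rewrite mleadX_proper //; apply: lreg_nz; rewrite mleadc_eq0.
Qed.

Lemma F_coef m : (F m)@_(g m) != 0.
Proof.
have -> : g m = (\sum_(i < 3) mlead (tnth f i ^+ m i))%MM.
  rewrite /g; apply: eq_bigr => i _.
  by rewrite mleadX_proper //; apply: lreg_nz; rewrite mleadc_eq0.
rewrite /F mleadc_prod; apply/prodf_neq0 => i _.
rewrite mleadcX_proper; last by apply: lreg_nz; rewrite mleadc_eq0.
by rewrite expf_neq0 // mleadc_eq0.
Qed.

Lemma comp_neq0 (p : {mpoly int[3]}) : p != 0 -> p \mPo f != 0.
Proof.
move=> pnz.
have [M Ms HM] := seq_max g (mlead_supp pnz).
apply/eqP => /(congr1 (mcoeff (g M))).
rewrite mcoeff0 comp_mpolyE raddf_sum /=.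
rewrite (bigD1_seq M) //= ?msupp_uniq //.
have -> : \sum_(m <- msupp p | m != M) (p@_m *: F m)@_(g M) = 0.
  rewrite big1_seq // => m /andP[ne ms]; rewrite mcoeffZ.
  have lt : (g m < g M)%O.
    rewrite lt_neqAle HM // andbT; apply/negP => /eqP /ginj /eqP.
    by rewrite (negbTE ne).
  have := le_lt_trans (F_mlead m) lt => /mcoeff_gt_mlead ->.
  by rewrite mulr0.
rewrite mcoeffZ addr0 => /eqP; rewrite mulf_eq0 => /orP[]; [by rewrite mcoeff_eq0 Ms|].
by move: (F_coef M) => /negbTE ->.
Qed.
End CompNeq0.
Local Open Scope ring_scope.
Definition mn3 (a b c : nat) : 'X_{1..3} := [multinom of [:: a; b; c]].
Lemma mn3E a b c (i : 'I_3) : mn3 a b c i = nth 0%N [:: a; b; c] i.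
Proof. by rewrite /mn3 multinomE (tnth_nth 0%N). Qed.
Lemma mdeg3 a b c : mdeg (mn3 a b c) = (a + b + c)%N.
Proof. by rewrite mdegE !big_ord_recr big_ord0 /= !mn3E. Qed.

Lemma evalZ3X m a1 a2 a3 : evalZ3 'X_[m] a1 a2 a3 = a1 ^+ m 0 * a2 ^+ m 1 * a3 ^+ m 2.
Proof.
rewrite evalZ3E map_mpolyX mevalX !big_ord_recl big_ord0 mulr1 /vec3 /= mulrA.
by congr (_ ^+ _ * _ ^+ _ * _ ^+ _); congr (fun_of_multinom m _); apply/val_inj.
Qed.

Lemma evalZ3mn a b c a1 a2 a3 : evalZ3 'X_[mn3 a b c] a1 a2 a3 = a1 ^+ a * a2 ^+ b * a3 ^+ c.
Proof. by rewrite evalZ3X !mn3E. Qed.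

Lemma evalZ3D p q a1 a2 a3 : evalZ3 (p + q) a1 a2 a3 = evalZ3 p a1 a2 a3 + evalZ3 q a1 a2 a3.
Proof. by rewrite !evalZ3E raddfD /= mevalD. Qed.
Lemma evalZ3N p a1 a2 a3 : evalZ3 (- p) a1 a2 a3 = - evalZ3 p a1 a2 a3.
Proof. by rewrite !evalZ3E raddfN /= mevalN. Qed.

Lemma indep_comp (f : 3.-tuple {mpoly int[3]}) x1 x2 x3 :
  alg_indep3 x1 x2 x3 -> (forall p, p != 0 -> p \mPo f != 0) ->
  alg_indep3 (evalZ3 (tnth f 0) x1 x2 x3) (evalZ3 (tnth f 1) x1 x2 x3) (evalZ3 (tnth f 2) x1 x2 x3).
Proof. by move=> H Hf p pnz; rewrite -evalZ3_comp; apply: H; apply: Hf. Qed.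

Lemma ord3_cases (P : 'I_3 -> Prop) : P 0 -> P 1 -> P 2 -> forall i, P i.
Proof.
move=> h0 h1 h2 [[|[|[|//]]] Hi].
- by have -> : Ordinal Hi = 0 by apply/val_inj.
- by have -> : Ordinal Hi = 1 by apply/val_inj.
- by have -> : Ordinal Hi = 2 by apply/val_inj.
Qed.

Lemma g_injP (f : 3.-tuple {mpoly int[3]}) :
  (forall m m' : 'X_{1..3}, (forall j, (\sum_(i < 3) (mlead (tnth f i) j * m i))%N = (\sum_(i < 3) (mlead (tnth f i) j * m' i))%N) -> m = m') ->
  injective (fun m : 'X_{1..3} => (\sum_(i < 3) (mlead (tnth f i) *+ m i))%MM).
Proof.
move=> H m m' /= E; apply: H => j.
have := congr1 (fun mm : 'X_{1..3} => mm j) E => /=.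
by rewrite !mnm_sumE; under eq_bigr do rewrite mulmnE; under [X in _ = X -> _]eq_bigr do rewrite mulmnE.
Qed.

Lemma sum3 (T : Type) (idx : T) (op : Monoid.com_law idx) (F : 'I_3 -> T) :
  \big[op/idx]_(i < 3) F i = op (F 0) (op (F 1) (F 2)).
Proof.
rewrite !big_ord_recl big_ord0 Monoid.mulm1.
by congr (op (F _) (op (F _) (F _))); apply/val_inj.
Qed.

Definition fneg : 3.-tuple {mpoly int[3]} := [tuple - 'X_0; - 'X_1; - 'X_2].

Lemma neg_indep a1 a2 a3 : alg_indep3 a1 a2 a3 -> alg_indep3 (- a1) (- a2) (- a3).
Proof.
move=> H.
have := @indep_comp fneg _ _ _ H.
have E : forall i, evalZ3 (- 'X_i) a1 a2 a3 = - vec3 a1 a2 a3 i.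
  by move=> i; rewrite evalZ3N evalZ3E map_mpolyX mevalXU.
rewrite /fneg !(tnth_nth 0) /= !E /vec3 /=; apply => p pnz.
apply: comp_neq0 => //.
  by apply: ord3_cases; rewrite (tnth_nth 0) /= oppr_eq0 -msupp_eq0 msuppX.
apply: g_injP => m m' Hj; apply/mnmP; apply: ord3_cases;
  move: (Hj 0) (Hj 1) (Hj 2); rewrite !sum3 !(tnth_nth 0) /= !mleadN !mleadXm !mnm1E /=; lia.
Qed.
Definition fcub : 3.-tuple {mpoly int[3]} :=
  [tuple - 'X_[mn3 3 0 0] + 'X_[mn3 1 2 0] + 'X_[mn3 1 0 2];
         'X_[mn3 2 1 0] + 'X_[mn3 0 1 2] - 'X_[mn3 0 3 0];
         'X_[mn3 2 0 1] + 'X_[mn3 0 2 1] - 'X_[mn3 0 0 3]].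

Lemma mlead_lead3 (p q r : {mpoly int[3]}) a :
  mlead p = a -> (mlead q < a)%O -> (mlead r < a)%O -> mlead (p + q + r) = a.
Proof.
move=> hp hq hr.
have h1 : mlead (p + q) = a by rewrite mleadDl hp.
by rewrite mleadDl h1.
Qed.

Lemma cub_leads :
  [/\ mlead (tnth fcub 0) = mn3 3 0 0, mlead (tnth fcub 1) = mn3 2 1 0 &
      mlead (tnth fcub 2) = mn3 2 0 1].
Proof.
rewrite !(tnth_nth 0) /=; split; apply: mlead_lead3;
  rewrite ?mleadN ?mleadXm //; rewrite ltEmnm !mdeg3; reflexivity.
Qed.

Lemma cub_indep x1 x2 x3 : alg_indep3 x1 x2 x3 ->
  alg_indep3 (evalZ3 (tnth fcub 0) x1 x2 x3) (evalZ3 (tnth fcub 1) x1 x2 x3)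
             (evalZ3 (tnth fcub 2) x1 x2 x3).
Proof.
move=> H; apply: indep_comp => // p pnz.
have [L0 L1 L2] := cub_leads.
apply: comp_neq0 => //.
  apply: ord3_cases; [rewrite -[tnth _ 0]/(tnth fcub 0)|rewrite -[tnth _ 1]/(tnth fcub 1)|rewrite -[tnth _ 2]/(tnth fcub 2)];
  apply/negP => /eqP E; [move: L0|move: L1|move: L2]; rewrite E mlead0 => /(congr1 mdeg);
  by rewrite mdeg3 mdeg0.
apply: g_injP => m m' Hj; apply/mnmP; apply: ord3_cases;
  move: (Hj 0) (Hj 1) (Hj 2); rewrite !sum3 L0 L1 L2 !mn3E /=; lia.
Qed.
Lemma mul_den (x : rat) : x * (denq x)%:~R = (numq x)%:~R.
Proof.
rewrite -{1}(divq_num_den x) mulfVK //.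
by rewrite intr_eq0 denq_neq0.
Qed.

Definition cardX (B : nat) : nat := #|(bmultinom 3 B : finType)|.

Lemma LA (N B : nat) (G : 'I_N -> {mpoly int[3]}) :
  (cardX B < N)%nat ->
  (forall r m, m \in msupp (G r) -> (mdeg m < B)%nat) ->
  exists2 c : 'I_N -> int, (exists r, c r != 0) & \sum_r c r *: G r = 0.
Proof.
move=> hcard hsupp.
pose K := cardX B.
pose A : 'M[rat]_(N, K) := \matrix_(r, s) ((G r)@_(bmnm (enum_val s)))%:~R.
have nrf : ~~ row_free A.
  rewrite /row_free; apply/negP => /eqP E.
  by move: (rank_leq_col A); rewrite E leqNgt hcard.
have kz : kermx A != 0 by rewrite kermx_eq0.
have [[r0 s0] /= Hrs|allz] := pickP (fun rs : 'I_N * 'I_N => kermx A rs.1 rs.2 != 0); last first.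
  exfalso; move/negP: kz; apply; apply/eqP/matrixP => i j.
  by have := allz (i, j); rewrite /= => /negbFE/eqP ->; rewrite mxE.
pose v := row r0 (kermx A).
have vA : v *m A = 0 by rewrite /v -row_mul mulmx_ker; apply/matrixP => i j; rewrite !mxE.
pose d := \prod_r denq (v 0 r).
pose c r := numq (v 0 r) * \prod_(r' | r' != r) denq (v 0 r').
have cE : forall r, (c r)%:~R = v 0 r * (d%:~R : rat).
  move=> r; rewrite /c /d [X in _ = _ * X%:~R](bigD1 r) //=.
  by rewrite !intrM mulrA mul_den.
exists c.
  exists s0; rewrite /c mulf_eq0 negb_or numq_eq0 /v mxE Hrs /=.
  by rewrite prodf_seq_neq0; apply/allP => i _; apply/implyP => _; rewrite denq_neq0.
apply/mpolyP => m; rewrite mcoeff0 raddf_sum /=.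
have [hm|hm] := ltnP (mdeg m) B; last first.
  rewrite big1 // => r _; rewrite mcoeffZ memN_msupp_eq0 ?mulr0 //.
  by apply/negP => /hsupp; rewrite ltnNge hm.
apply: (@intr_inj rat); rewrite rmorph0 rmorph_sum /=.
pose s : 'I_K := enum_rank (BMultinom hm).
have := congr1 (fun M : 'M[rat]_(1, K) => M 0 s) vA; rewrite !mxE => E.
rewrite (eq_bigr (fun r => (d%:~R : rat) * (v 0 r * A r s))); last first.
  move=> r _; rewrite mcoeffZ rmorphM /= cE /A /s !mxE enum_rankK /=.
  by rewrite mulrCA mulrA.
by rewrite -mulr_sumr E mulr0.
Qed.
Lemma evalZ3M p q a1 a2 a3 : evalZ3 (p * q) a1 a2 a3 = evalZ3 p a1 a2 a3 * evalZ3 q a1 a2 a3.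
Proof. by rewrite !evalZ3E rmorphM /= mevalM. Qed.
Lemma evalZ3Xn p k a1 a2 a3 : evalZ3 (p ^+ k) a1 a2 a3 = evalZ3 p a1 a2 a3 ^+ k.
Proof.
elim: k => [|k IH]; first by rewrite !expr0 evalZ3E rmorph1 meval1.
by rewrite !exprS evalZ3M IH.
Qed.
Lemma evalZ3_0 a1 a2 a3 : evalZ3 0 a1 a2 a3 = 0.
Proof. by rewrite evalZ3E raddf0 meval0. Qed.
Lemma evalZ3_sum (I : finType) (F : I -> {mpoly int[3]}) a1 a2 a3 :
  evalZ3 (\sum_i F i) a1 a2 a3 = \sum_i evalZ3 (F i) a1 a2 a3.
Proof. by apply: (big_morph _ (fun p q => evalZ3D p q a1 a2 a3) (evalZ3_0 _ _ _)). Qed.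
Lemma evalZ3Z c p a1 a2 a3 : evalZ3 (c *: p) a1 a2 a3 = c%:~R * evalZ3 p a1 a2 a3.
Proof. by rewrite !evalZ3E map_mpolyZ mevalZ. Qed.


Definition dle (q : {mpoly int[3]}) (d : nat) := forall m, m \in msupp q -> (mdeg m <= d)%nat.
Lemma dle_msize q : dle q (msize q).
Proof. by move=> m /(mmeasure_mnm_lt mdeg) /ltnW. Qed.
Lemma dle_mono q d d' : dle q d -> (d <= d')%nat -> dle q d'.
Proof. by move=> h hd m /h hm; apply: leq_trans hm hd. Qed.
Lemma dle1 : dle 1 0.
Proof. by move=> m; rewrite msupp1 inE => /eqP ->; rewrite mdeg0. Qed.
Lemma dleM q1 q2 d1 d2 : dle q1 d1 -> dle q2 d2 -> dle (q1 * q2) (d1 + d2).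
Proof.
move=> h1 h2 m /msuppM_le /allpairsP [[m1 m2] /= [i1 i2 ->]].
by rewrite mdegD leq_add // ?h1 ?h2.
Qed.
Lemma dleX q d k : dle q d -> dle (q ^+ k) (d * k).
Proof.
move=> h; elim: k => [|k IH]; first by rewrite expr0 muln0; apply: dle1.
by rewrite exprS mulnS; apply: dleM.
Qed.

Lemma mdeg_le (m : 'X_{1..3}) i : (m i <= mdeg m)%nat.
Proof. by rewrite mdegE (bigD1 i) //= leq_addr. Qed.

Lemma cardX_le B : (cardX B <= B * B * B)%nat.
Proof.
have inj : injective (fun m : 'X_{1..3 < B} =>
   (Ordinal (leq_ltn_trans (mdeg_le m 0) (bmdeg m)),
    Ordinal (leq_ltn_trans (mdeg_le m 1) (bmdeg m)),
    Ordinal (leq_ltn_trans (mdeg_le m 2) (bmdeg m)))).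
  move=> m m' [] h0 h1 h2; apply/val_inj/mnmP; apply: ord3_cases => //.
have := @leq_card _ _ _ inj; rewrite !card_prod !card_ord /cardX.
by [].
Qed.
Lemma mn3_inj (a b c a' b' c' : nat) : mn3 a b c = mn3 a' b' c' -> [/\ a = a', b = b' & c = c'].
Proof.
move=> E; have := congr1 (fun m : 'X_{1..3} => (m 0, m 1, m 2)) E.
by rewrite /= !mn3E /= => -[-> -> ->].
Qed.

Lemma dep_arith (d D : nat) : (0 < d)%nat -> D = (125 * (d * d * d)).+1 ->
  ((4 * d * D).+1 * (4 * d * D).+1 * (4 * d * D).+1 < D * D * D * D)%nat.
Proof.
move=> hd hDe.
have hD : (0 < D)%nat by rewrite hDe.
have h1 : ((4 * d * D).+1 <= 5 * d * D)%nat.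
  have : (1 <= d * D)%nat by rewrite muln_gt0 hd.
  lia.
have h2 : ((4 * d * D).+1 * (4 * d * D).+1 * (4 * d * D).+1 <= (5 * d * D) * (5 * d * D) * (5 * d * D))%nat.
  by rewrite !leq_mul.
apply: leq_ltn_trans h2 _.
have -> : ((5 * d * D) * (5 * d * D) * (5 * d * D) = (125 * (d * d * d)) * (D * D * D))%nat by nia.
have -> : (D * D * D * D = D * (D * D * D))%nat by nia.
rewrite ltn_pmul2r; [by rewrite hDe | by rewrite !muln_gt0 hD].
Qed.
Lemma dep_lemma (f : 3.-tuple {mpoly int[3]}) z1 z2 z3 :
  alg_indep3 (evalZ3 (tnth f 0) z1 z2 z3) (evalZ3 (tnth f 1) z1 z2 z3) (evalZ3 (tnth f 2) z1 z2 z3) ->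
  alg_indep3 z1 z2 z3.
Proof.
move=> H p pnz pz.
set f0 := tnth f 0; set f1 := tnth f 1; set f2 := tnth f 2.
pose d := (msize f0 + msize f1 + msize f2 + msize p).+1.
pose D := (125 * (d * d * d)).+1.
pose B := (4 * d * D).+1.
pose I : finType := ('I_D * 'I_D * 'I_D * 'I_D)%type.
pose Fy (y : 'I_D * 'I_D * 'I_D) := f0 ^+ y.1.1 * f1 ^+ y.1.2 * f2 ^+ y.2.
pose Gf (x : I) := Fy x.1 * p ^+ x.2.
have hN : (cardX B < #|I|)%nat.
  apply: leq_ltn_trans (cardX_le B) _.
  rewrite !card_prod !card_ord.
  exact: (@dep_arith d D).
have hsupp : forall (r : 'I_#|I|) (m : 'X_{1..3}), m \in msupp (Gf (enum_val r)) -> (mdeg m < B)%nat.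
  move=> r m; set x := enum_val r.
  have hd : forall q, (msize q < d)%nat -> dle q d.
    by move=> q hq; exact: (dle_mono (@dle_msize q) (ltnW hq)).
  have e0 : (msize f0 < d)%nat by rewrite /d; lia.
  have e1 : (msize f1 < d)%nat by rewrite /d; lia.
  have e2 : (msize f2 < d)%nat by rewrite /d; lia.
  have e3 : (msize p < d)%nat by rewrite /d; lia.
  have G := dleM (dleM (dleM (@dleX f0 d x.1.1.1 (hd f0 e0)) (@dleX f1 d x.1.1.2 (hd f1 e1)))
                   (@dleX f2 d x.1.2 (hd f2 e2))) (@dleX p d x.2 (hd p e3)).
  move/G => hm; apply: leq_ltn_trans hm _.
  have h1 := ltn_ord x.1.1.1; have h2 := ltn_ord x.1.1.2; have h3 := ltn_ord x.1.2; have h4 := ltn_ord x.2.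
  rewrite /B ltnS.
  have e : (d * x.1.1.1 + d * x.1.1.2 + d * x.1.2 + d * x.2 = d * (x.1.1.1 + x.1.1.2 + x.1.2 + x.2))%nat by nia.
  rewrite e.
  have hs : (x.1.1.1 + x.1.1.2 + x.1.2 + x.2 <= 4 * D)%nat by lia.
  have := leq_mul (leqnn d) hs.
  have -> : (d * (4 * D) = 4 * d * D)%nat by nia.
  by [].
have [c [r0 cr0] hsum] := LA hN hsupp.
pose C (x : I) := c (enum_rank x).
have hsum' : \sum_(x : I) C x *: Gf x = 0.
  apply: etrans hsum; rewrite [RHS](reindex enum_rank) /=; last by apply: onW_bij; exact: enum_rank_bij.
  by apply: eq_bigr => r _; rewrite /C enum_rankK.
pose Q (j : 'I_D) := \sum_(y : 'I_D * 'I_D * 'I_D) C (y, j) *: 'X_[mn3 y.1.1 y.1.2 y.2].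
pose S (j : 'I_D) := \sum_(y : 'I_D * 'I_D * 'I_D) C (y, j) *: Fy y.
have QS : forall j, Q j \mPo f = S j.
  move=> j; rewrite /Q /S raddf_sum /=; apply: eq_bigr => y _.
  rewrite comp_mpolyZ comp_mpolyX sum3 !mn3E /= mulrA.
  by [].
have hS : \sum_j S j * p ^+ j = 0.
  apply: (etrans _ hsum'); rewrite /S.
  under eq_bigr do rewrite mulr_suml.
  rewrite exchange_big /= pair_bigA /=.
  by apply: eq_bigr => -[y j] _; rewrite /Gf -scalerAl.
have Qcoef : forall (j : 'I_D) (y : 'I_D * 'I_D * 'I_D), (Q j)@_(mn3 y.1.1 y.1.2 y.2) = C (y, j).
  move=> j y; rewrite /Q raddf_sum /= (bigD1 y) //= mcoeffZ mcoeffX eqxx mulr1.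
  rewrite big1 ?addr0 // => y' ne; rewrite mcoeffZ mcoeffX.
  case: eqP => [/mn3_inj [h1 h2 h3]|_]; last by rewrite mulr0.
  move: ne; case: y' h1 h2 h3 => [[a b] c'] /=; case: y => [[a' b'] c''] /= h1 h2 h3.
  by rewrite (val_inj h1) (val_inj h2) (val_inj h3) eqxx.
pose x0 := enum_val r0.
have Qx0 : Q x0.2 != 0.
  apply/negP => /eqP E; move: (Qcoef x0.2 x0.1); rewrite E mcoeff0 /C -surjective_pairing /x0 enum_valK.
  by move=> /esym /eqP; rewrite (negbTE cr0).
case: (@arg_minnP _ x0.2 (fun j : 'I_D => Q j != 0) (fun j : 'I_D => nat_of_ord j) Qx0) => j0 Qj0 minj0.
have Slt : forall j : 'I_D, (j < j0)%nat -> S j = 0.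
  move=> j hj; rewrite -QS.
  have : Q j = 0.
    apply/eqP; apply: contraTT hj => /minj0; by rewrite -leqNgt.
  by move=> ->; rewrite comp_mpoly0.
have hsplit : \sum_j S j * p ^+ j = p ^+ j0 * \sum_j S j * p ^+ (j - j0).
  rewrite mulr_sumr; apply: eq_bigr => j _.
  have [hj|hj] := ltnP j j0; first by rewrite Slt // !mul0r mulr0.
  by rewrite mulrCA -exprD subnKC.
have h2 : \sum_j S j * p ^+ (j - j0) = 0.
  move: hS; rewrite hsplit => /eqP; rewrite mulf_eq0 expf_eq0 (negbTE pnz) andbF /=.
  by move/eqP.
have := congr1 (fun q => evalZ3 q z1 z2 z3) h2; rewrite /= evalZ3_sum evalZ3_0.
rewrite (bigD1 j0) //= big1; last first.
  move=> j ne; rewrite evalZ3M evalZ3Xn pz.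
  have [hj|hj] := ltnP j j0; first by rewrite Slt // evalZ3_0 mul0r.
  rewrite expr0n.
  have -> : (j - j0 == 0)%nat = false.
    apply/negbTE; rewrite subn_eq0 -ltnNge ltn_neqAle hj andbT.
    by rewrite eq_sym; apply/negP => /eqP /val_inj /eqP; rewrite (negbTE ne).
  by rewrite mulr0.
rewrite subnn expr0 mulr1 addr0 -QS evalZ3_comp.
by apply: H.
Qed.
Local Open Scope ring_scope.
Lemma evalZ3_sumS (I : Type) (r : seq I) (P : pred I) (F : I -> {mpoly int[3]}) a1 a2 a3 :
  evalZ3 (\sum_(i <- r | P i) F i) a1 a2 a3 = \sum_(i <- r | P i) evalZ3 (F i) a1 a2 a3.
Proof. by apply: (big_morph _ (fun p q => evalZ3D p q a1 a2 a3) (evalZ3_0 _ _ _)). Qed.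

Definition smon (s1 s2 s3 : R) (m : 'X_{1..3}) : R := s1 ^+ m (0 : 'I_3) * s2 ^+ m (1 : 'I_3) * s3 ^+ m (2 : 'I_3).

Definition i0 : 'I_3 := 0.
Definition i1 : 'I_3 := 1.
Definition i2 : 'I_3 := 2.
Lemma mdeg3E (m : 'X_{1..3}) : mdeg m = (m i0 + m i1 + m i2)%nat.
Proof. by rewrite mdegE sum3 /=; apply: addnA. Qed.

Lemma reorder6 (a b c x y z : R) : a*x*(b*y)*(c*z) = a*b*c*(x*y*z).
Proof. by rewrite [a * x * _]mulrACA (mulrACA (a * b) (x * y) c z). Qed.

Lemma evalZ3_scale p (k s1 s2 s3 : R) :
  evalZ3 p (k * s1) (k * s2) (k * s3) =
  \sum_(m <- msupp p) (p@_m)%:~R * smon s1 s2 s3 m * k ^+ mdeg m.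
Proof.
rewrite {1}(mpolyE p) evalZ3_sumS; apply: eq_bigr => m _.
rewrite evalZ3Z evalZ3X !exprMn mdeg3E !exprD /smon /i0 /i1 /i2.
rewrite -[RHS]mulrA; congr (_ * _); rewrite [RHS]mulrC reorder6.
by [].
Qed.

Definition Ppoly (s1 s2 s3 : R) (p : {mpoly int[3]}) : {poly R} :=
  \sum_(m <- msupp p) ((p@_m)%:~R * smon s1 s2 s3 m) *: 'X^(mdeg m).

Lemma PpolyE s1 s2 s3 p k : (Ppoly s1 s2 s3 p).[k] = evalZ3 p (k * s1) (k * s2) (k * s3).
Proof.
rewrite evalZ3_scale /Ppoly horner_sum; apply: eq_bigr => m _.
by rewrite hornerZ hornerXn.
Qed.

Lemma Ppoly_neq0 s1 s2 s3 k0 p : alg_indep3 (k0 * s1) (k0 * s2) (k0 * s3) -> p != 0 ->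
  Ppoly s1 s2 s3 p != 0.
Proof.
move=> H pnz; apply/negP => /eqP P0.
have [m0 m0s] : exists m0, m0 \in msupp p.
  by exists (mlead p); apply: mlead_supp.
pose n := mdeg m0.
pose pn := \sum_(m <- msupp p | mdeg m == n) p@_m *: 'X_[m].
have pnnz : pn != 0.
  apply/negP => /eqP /(congr1 (mcoeff m0)); rewrite mcoeff0 /pn raddf_sum /=.
  rewrite big_mkcond /= (bigD1_seq m0) ?msupp_uniq //= eqxx.
  rewrite big1_seq; last first.
    by move=> m /andP[ne _]; case: ifP => // _; rewrite mcoeffZ mcoeffX (negbTE ne) mulr0.
  rewrite mcoeffZ mcoeffX eqxx mulr1 addr0 => /eqP.
  by rewrite mcoeff_eq0 m0s.
apply: (H pn pnnz).
have := congr1 (fun P : {poly R} => P`_n) P0; rewrite coef0 /Ppoly coef_sum.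
under eq_bigr do rewrite coefZ coefXn.
move=> hc.
have hc' : \sum_(i <- msupp p | mdeg i == n) (p@_i)%:~R * smon s1 s2 s3 i = 0.
  apply: etrans hc; rewrite big_mkcond; apply: eq_bigr => i _; rewrite eq_sym.
  by case: (n == mdeg i); rewrite ?mulr1 ?mulr0.
rewrite /pn evalZ3_sumS.
transitivity (k0 ^+ n * \sum_(i <- msupp p | mdeg i == n) (p@_i)%:~R * smon s1 s2 s3 i); last first.
  by rewrite hc' mulr0.
rewrite mulr_sumr big_seq_cond [RHS]big_seq_cond.
apply: eq_bigr => m /andP[_ /eqP hm].
rewrite evalZ3Z evalZ3X !exprMn /smon -hm mdeg3E !exprD /i0 /i1 /i2 reorder6 mulrCA.
by [].
Qed.

Local Open Scope ring_scope.
Lemma roots_list (P : {poly R}) : P != 0 -> exists s : seq R, forall x, root P x -> x \in s.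
Proof.
move: {2}(size P) (leqnn (size P)) => n; elim: n P => [|n IH] P hs Pnz.
  by move: Pnz; rewrite -size_poly_eq0; move: hs; rewrite leqn0 => ->.
have [[x0 hx0]|nr] := classic (exists x, root P x); last first.
  by exists [::] => x hx; exfalso; apply: nr; exists x.
have /factor_theorem [q Pq] := hx0.
have qnz : q != 0 by apply/negP => /eqP q0; move: Pnz; rewrite Pq q0 mul0r eqxx.
have hq : (size q <= n)%nat.
  move: hs; rewrite Pq size_mul ?polyXsubC_eq0 // size_XsubC addn2 /=.
  by [].
have [s hs'] := IH q hq qnz.
exists (x0 :: s) => x; rewrite /root Pq hornerM mulf_eq0 => /orP[/hs' h|].
  by rewrite inE h orbT.
by rewrite !hornerE subr_eq0 inE => ->.
Qed.

Definition PP (b i : nat) : {mpoly int[3]} :=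
  if (unpickle i : option {ffun 'X_{1..3 < b} -> int}) is Some g
  then \sum_(m : 'X_{1..3 < b}) g m *: 'X_[bmnm m] else 0.

Lemma PP_surj p : exists b i, PP b i = p.
Proof.
exists (msize p), (pickle [ffun m : 'X_{1..3 < msize p} => p@_(bmnm m)]).
rewrite /PP pickleK [RHS](mpolywE (leqnn _)).
by apply: eq_bigr => m _; rewrite ffunE.
Qed.

Definition dec3 (n : nat) : nat * nat * nat := odflt (0, 0, 0)%nat (unpickle n).
Lemma dec3K t : dec3 (pickle t) = t.
Proof. by rewrite /dec3 pickleK. Qed.

Lemma cover_bad (s1 s2 s3 : R) : (exists k0, alg_indep3 (k0*s1) (k0*s2) (k0*s3)) ->
  exists e : nat -> R, forall k, ~ alg_indep3 (k*s1) (k*s2) (k*s3) -> exists n, e n = k.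
Proof.
case=> k0 H0.
have hL : forall q : {mpoly int[3]}, exists l : seq R,
    forall k, q != 0 -> evalZ3 q (k*s1) (k*s2) (k*s3) = 0 -> k \in l.
  move=> q; case: (eqVneq q 0) => [->|qnz]; first by exists [::] => k /eqP.
  have [l hl] := roots_list (Ppoly_neq0 H0 qnz).
  by exists l => k _ hk; apply: hl; rewrite /root PpolyE hk.
pose L q := proj1_sig (constructive_indefinite_description _ (hL q)).
pose e (n : nat) := let t := dec3 n in nth 0 (L (PP t.1.1 t.1.2)) t.2.
exists e => k nk.
have [q [qnz qk]] : exists q, q != 0 /\ evalZ3 q (k*s1) (k*s2) (k*s3) = 0.
  apply: NNPP => hn; apply: nk => q qnz hq; apply: hn; by exists q.
have [b [i hbi]] := PP_surj q.
have kin : k \in L q := proj2_sig (constructive_indefinite_description _ (hL q)) k qnz qk.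
exists (pickle (b, i, index k (L q))).
by rewrite /e dec3K /= hbi nth_index.
Qed.

Local Open Scope R_scope.
Lemma geo_sum (eps : R) N : sum_f_R0 (fun n => eps / 2 ^ (S n)) N = eps - eps / 2 ^ (S N).
Proof.
elim: N => [|N IH] /=; first by field.
rewrite IH /=; field; apply: pow_nonzero; lra.
Qed.

Lemma null_of_cover (Sb : R -> Prop) (e : nat -> R) :
  (forall k, Sb k -> exists n, e n = k) -> null_set Sb.
Proof.
move=> hc eps heps.
exists (fun n => e n - eps / 2 ^ (S (S n))), (fun n => e n + eps / 2 ^ (S (S n))).
have hp : forall n, 0 < eps / 2 ^ n.
  move=> n; apply: Rdiv_lt_0_compat => //; apply: pow_lt; lra.
split; [|split].
- by move=> n; have := hp (S (S n)); lra.
- move=> x /hc [n <-]; exists n; have := hp (S (S n)); lra.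
- move=> N.
  have -> : sum_f_R0 (fun n => e n + eps / 2 ^ S (S n) - (e n - eps / 2 ^ S (S n))) N =
            sum_f_R0 (fun n => eps / 2 ^ (S n)) N.
    apply: sum_eq => n _ /=; field; apply: pow_nonzero; lra.
  rewrite geo_sum; have := hp (S N); lra.
Qed.
Lemma fcubE x1 x2 x3 :
  [/\ evalZ3 (tnth fcub i0) x1 x2 x3 = x1 * (x2^2 + x3^2 - x1^2),
      evalZ3 (tnth fcub i1) x1 x2 x3 = x2 * (x1^2 + x3^2 - x2^2) &
      evalZ3 (tnth fcub i2) x1 x2 x3 = x3 * (x1^2 + x2^2 - x3^2)].
Proof.
rewrite /i0 /i1 /i2 !(tnth_nth (@GRing.zero _)) /= !evalZ3D ?evalZ3N !evalZ3mn.
rewrite -!RpowE -!RmultE -!RoppE -!RplusE.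
split; ring.
Qed.

Lemma indep_nz a1 a2 a3 : alg_indep3 a1 a2 a3 -> a1 <> 0.
Proof.
move=> H h; apply: (H ('X_i0 : {mpoly int[3]})).
  by rewrite -msupp_eq0 msuppX.
by rewrite evalZ3E map_mpolyX mevalXU /vec3 /= h.
Qed.

Lemma neg_indep' a1 a2 a3 : alg_indep3 (- a1) (- a2) (- a3) -> alg_indep3 a1 a2 a3.
Proof. by move/neg_indep; rewrite !Ropp_involutive. Qed.
Lemma seglen_sym (P Q : point) : seglen P Q = seglen Q P.
Proof. rewrite /seglen; f_equal; ring. Qed.

Lemma seglen_sq (P Q : point) : seglen P Q ^ 2 = (fst Q - fst P) ^ 2 + (snd Q - snd P) ^ 2.
Proof. by rewrite /seglen pow2_sqrt //; apply: Rplus_le_le_0_compat; apply: pow2_ge_0. Qed.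

Lemma angle_facts (P Q S : point) :
  (fst Q - fst P) * (snd S - snd P) - (snd Q - snd P) * (fst S - fst P) <> 0 ->
  [/\ 0 < seglen P Q, 0 < seglen P S,
      cos (angle_at P Q S) = ((fst Q - fst P) * (fst S - fst P) + (snd Q - snd P) * (snd S - snd P)) / (seglen P Q * seglen P S) &
      sin (angle_at P Q S) = Rabs ((fst Q - fst P) * (snd S - snd P) - (snd Q - snd P) * (fst S - fst P)) / (seglen P Q * seglen P S)].
Proof.
move=> hc.
have ha2 := seglen_sq P Q; have hb2 := seglen_sq P S.
have a0 : 0 <= seglen P Q := sqrt_pos _.
have b0 : 0 <= seglen P S := sqrt_pos _.
rewrite /angle_at.
move: hc ha2 hb2 a0 b0.
move: (fst Q - fst P) (snd Q - snd P) (fst S - fst P) (snd S - snd P) (seglen P Q) (seglen P S).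
move=> ux uy vx vy a b hc ha2 hb2 a0 b0.
have apos : 0 < a.
  case: (Rle_lt_or_eq_dec 0 a a0) => // e; exfalso; apply: hc.
  rewrite -e in ha2.
  have hx : ux = 0 by nra.
  have hy : uy = 0 by nra.
  by rewrite hx hy; ring.
have bpos : 0 < b.
  case: (Rle_lt_or_eq_dec 0 b b0) => // e; exfalso; apply: hc.
  rewrite -e in hb2.
  have hx : vx = 0 by nra.
  have hy : vy = 0 by nra.
  by rewrite hx hy; ring.
have ab : 0 < a * b by apply: Rmult_lt_0_compat.
have lag : (ux * vx + uy * vy) ^ 2 + (ux * vy - uy * vx) ^ 2 = (a * b) ^ 2.
  by rewrite Rpow_mult_distr ha2 hb2; ring.
set t := (ux * vx + uy * vy) / (a * b).
have et : ux * vx + uy * vy = t * (a * b) by rewrite /t; field; lra.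
have ht2 : t ^ 2 <= 1.
  have h : (t * (a * b)) ^ 2 <= (a * b) ^ 2 by rewrite -et -lag; have := pow2_ge_0 (ux * vy - uy * vx); lra.
  rewrite Rpow_mult_distr in h.
  have hab2 : 0 < (a * b) ^ 2 by apply: pow_lt.
  nra.
have ht : -1 <= t <= 1 by split; nra.
split => //; first by rewrite cos_acos.
rewrite sin_acos //.
have hnn : 0 <= Rabs (ux * vy - uy * vx) / (a * b).
  by apply: Rmult_le_pos; [apply: Rabs_pos | apply: Rlt_le; apply: Rinv_0_lt_compat].
rewrite -[RHS](sqrt_Rsqr _ hnn); f_equal.
rewrite /Rsqr.
have habs : Rabs (ux * vy - uy * vx) * Rabs (ux * vy - uy * vx) = (ux * vy - uy * vx) * (ux * vy - uy * vx).
  by rewrite -Rabs_mult; apply: Rabs_pos_eq; apply: Rle_0_sqr.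
have -> : Rabs (ux * vy - uy * vx) / (a * b) * (Rabs (ux * vy - uy * vx) / (a * b)) =
          (Rabs (ux * vy - uy * vx) * Rabs (ux * vy - uy * vx)) / ((a * b) * (a * b)) by field; lra.
have hcr : (ux * vy - uy * vx) * (ux * vy - uy * vx) = (a * b) * (a * b) - (ux * vx + uy * vy) * (ux * vx + uy * vy).
  by move: lag => /=; lra.
rewrite habs hcr /t; field; lra.
Qed.
Lemma cube_root (a : R) : 0 < a -> exists mu, 0 < mu /\ mu * mu * mu = a.
Proof.
move=> ha; exists (exp (ln a / 3)); split; first exact: exp_pos.
rewrite -!exp_plus.
have -> : ln a / 3 + ln a / 3 + ln a / 3 = ln a by field.
by rewrite exp_ln.
Qed.

Lemma main_abstract (l1 l2 l3 Dv s1 s2 s3 c1 c2 c3 : R) :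
  0 < l1 -> 0 < l2 -> 0 < l3 -> Dv <> 0 ->
  s1 = Rabs Dv / (l3 * l2) -> s2 = Rabs Dv / (l3 * l1) -> s3 = Rabs Dv / (l2 * l1) ->
  2 * l3 * l2 * c1 = l2^2 + l3^2 - l1^2 ->
  2 * l3 * l1 * c2 = l3^2 + l1^2 - l2^2 ->
  2 * l2 * l1 * c3 = l2^2 + l1^2 - l3^2 ->
  let gen_i := exists k : R, 0 < k /\ alg_indep3 (k * l1) (k * l2) (k * l3) in
  let gen_s := exists k : R, alg_indep3 (k * s1) (k * s2) (k * s3) in
  let gen_c := exists k : R, alg_indep3 (k * c1) (k * c2) (k * c3) in
  (gen_i <-> gen_s) /\ (gen_i <-> gen_c) /\
  (gen_s -> null_set (fun k : R => ~ alg_indep3 (k * s1) (k * s2) (k * s3))) /\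
  (gen_c -> null_set (fun k : R => ~ alg_indep3 (k * c1) (k * c2) (k * c3))).
Proof.
move=> h1 h2 h3 hD es1 es2 es3 ec1 ec2 ec3 gi gs gc.
have aD : 0 < Rabs Dv by apply: Rabs_pos_lt.
have ec1' : c1 = (l2^2 + l3^2 - l1^2) / (2 * l3 * l2) by rewrite -ec1; field; lra.
have ec2' : c2 = (l3^2 + l1^2 - l2^2) / (2 * l3 * l1) by rewrite -ec2; field; lra.
have ec3' : c3 = (l2^2 + l1^2 - l3^2) / (2 * l2 * l1) by rewrite -ec3; field; lra.
have posk : forall k, k <> 0 -> alg_indep3 (k * l1) (k * l2) (k * l3) -> gi.
  move=> k kz hk; case: (Rlt_or_le 0 k) => hk0; first by exists k.
  exists (- k); split; first lra.
  have := neg_indep hk; rewrite !Ropp_mult_distr_l //.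
split; [split|split; [split|split]].
- case=> k [hk Hk]; exists (k * (l1 * l2 * l3) / Rabs Dv).
  have -> : k * (l1 * l2 * l3) / Rabs Dv * s1 = k * l1 by rewrite es1; field; lra.
  have -> : k * (l1 * l2 * l3) / Rabs Dv * s2 = k * l2 by rewrite es2; field; lra.
  have -> : k * (l1 * l2 * l3) / Rabs Dv * s3 = k * l3 by rewrite es3; field; lra.
  exact: Hk.
- case=> k Hk; apply: (posk (k * Rabs Dv / (l1 * l2 * l3))).
    have kz : k <> 0 by move=> e; apply: (indep_nz Hk); rewrite e; ring.
    have hP : 0 < l1 * l2 * l3 by apply: Rmult_lt_0_compat => //; apply: Rmult_lt_0_compat.
    have hq : 0 < Rabs Dv / (l1 * l2 * l3) by apply: Rdiv_lt_0_compat.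
    move=> e; rewrite /Rdiv Rmult_assoc in e; case: (Rmult_integral _ _ e) => //.
    by rewrite /Rdiv in hq; lra.
  have -> : k * Rabs Dv / (l1 * l2 * l3) * l1 = k * s1 by rewrite es1; field; lra.
  have -> : k * Rabs Dv / (l1 * l2 * l3) * l2 = k * s2 by rewrite es2; field; lra.
  have -> : k * Rabs Dv / (l1 * l2 * l3) * l3 = k * s3 by rewrite es3; field; lra.
  exact: Hk.
- case=> k [hk Hk]; exists (2 * k ^ 3 * l1 * l2 * l3).
  have [E0 E1 E2] := fcubE (k* l1) (k* l2) (k* l3).
  have -> : 2 * k ^ 3 * l1 * l2 * l3 * c1 = evalZ3 (tnth fcub i0) (k* l1) (k* l2) (k* l3).
    by rewrite E0 ec1'; field; lra.
  have -> : 2 * k ^ 3 * l1 * l2 * l3 * c2 = evalZ3 (tnth fcub i1) (k* l1) (k* l2) (k* l3).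
    by rewrite E1 ec2'; field; lra.
  have -> : 2 * k ^ 3 * l1 * l2 * l3 * c3 = evalZ3 (tnth fcub i2) (k* l1) (k* l2) (k* l3).
    by rewrite E2 ec3'; field; lra.
  exact: cub_indep Hk.
- have hP : 0 < l1 * l2 * l3 by apply: Rmult_lt_0_compat => //; apply: Rmult_lt_0_compat.
  have key : forall k', 0 < k' -> alg_indep3 (k' * c1) (k' * c2) (k' * c3) -> gi.
    move=> k' hk' H'.
    have hq : 0 < k' / (2 * l1 * l2 * l3).
      by apply: Rdiv_lt_0_compat => //; lra.
    have [mu [hmu emu]] := cube_root hq.
    exists mu; split => //; apply: (@dep_lemma fcub).
    have [E0 E1 E2] := fcubE (mu* l1) (mu* l2) (mu* l3).
    move: E0 E1 E2; rewrite /i0 /i1 /i2 => -> -> ->.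
    have -> : mu * l1 * ((mu * l2) ^ 2 + (mu * l3) ^ 2 - (mu * l1) ^ 2) = k' * c1.
      transitivity ((mu * mu * mu) * (l1 * (l2^2 + l3^2 - l1^2))); first by ring.
      by rewrite emu ec1'; field; lra.
    have -> : mu * l2 * ((mu * l1) ^ 2 + (mu * l3) ^ 2 - (mu * l2) ^ 2) = k' * c2.
      transitivity ((mu * mu * mu) * (l2 * (l1^2 + l3^2 - l2^2))); first by ring.
      by rewrite emu ec2'; field; lra.
    have -> : mu * l3 * ((mu * l1) ^ 2 + (mu * l2) ^ 2 - (mu * l3) ^ 2) = k' * c3.
      transitivity ((mu * mu * mu) * (l3 * (l1^2 + l2^2 - l3^2))); first by ring.
      by rewrite emu ec3'; field; lra.
    exact: H'.
  case=> k Hk.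
  have kz : k <> 0 by move=> e; apply: (indep_nz Hk); rewrite e; ring.
  case: (Rlt_or_le 0 k) => hk0; first exact: (key k).
  apply: (key (- k)); first lra.
  by have := neg_indep Hk; rewrite !Ropp_mult_distr_l.
- move=> Hs; have [e he] := cover_bad Hs; exact: null_of_cover he.
- move=> Hc; have [e he] := cover_bad Hc; exact: null_of_cover he.
Qed.
Theorem proposition2p2 (A1 A2 A3 : point) :
  noncollinear A1 A2 A3 ->
  let l1 := seglen A2 A3 in
  let l2 := seglen A1 A3 in
  let l3 := seglen A1 A2 in
  let alpha1 := angle_at A1 A2 A3 in
  let alpha2 := angle_at A2 A1 A3 in
  let alpha3 := angle_at A3 A1 A2 in
  let gen_i := exists k : R, 0 < k /\ alg_indep3 (k * l1) (k * l2) (k * l3) in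
  let gen_s := exists k : R,
      alg_indep3 (k * sin alpha1) (k * sin alpha2) (k * sin alpha3) in
  let gen_c := exists k : R,
      alg_indep3 (k * cos alpha1) (k * cos alpha2) (k * cos alpha3) in
  (gen_i <-> gen_s) /\ (gen_i <-> gen_c) /\
  (gen_s -> null_set (fun k : R =>
      ~ alg_indep3 (k * sin alpha1) (k * sin alpha2) (k * sin alpha3))) /\
  (gen_c -> null_set (fun k : R =>
      ~ alg_indep3 (k * cos alpha1) (k * cos alpha2) (k * cos alpha3))).
Proof.
move=> hnc; rewrite /noncollinear in hnc.
have [p1 p2 c1E s1E] := angle_facts hnc.
have hnc2 : (fst A1 - fst A2) * (snd A3 - snd A2) - (snd A1 - snd A2) * (fst A3 - fst A2) <> 0.
  move=> e; apply: hnc.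
  transitivity (- ((fst A1 - fst A2) * (snd A3 - snd A2) - (snd A1 - snd A2) * (fst A3 - fst A2))); first by ring.
  by rewrite e; ring.
have [q1 q2 c2E s2E] := angle_facts hnc2.
have hnc3 : (fst A1 - fst A3) * (snd A2 - snd A3) - (snd A1 - snd A3) * (fst A2 - fst A3) <> 0.
  move=> e; apply: hnc.
  transitivity ((fst A1 - fst A3) * (snd A2 - snd A3) - (snd A1 - snd A3) * (fst A2 - fst A3)); first by ring.
  by rewrite e.
have [r1 r2 c3E s3E] := angle_facts hnc3.
rewrite (seglen_sym A2 A1) in c2E s2E q1.
rewrite (seglen_sym A3 A1) (seglen_sym A3 A2) in c3E s3E r1 r2.
set D := (fst A2 - fst A1) * (snd A3 - snd A1) - (snd A2 - snd A1) * (fst A3 - fst A1).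
have e2 : Rabs ((fst A1 - fst A2) * (snd A3 - snd A2) - (snd A1 - snd A2) * (fst A3 - fst A2)) = Rabs D.
  rewrite -Rabs_Ropp; f_equal; rewrite /D; ring.
have e3 : Rabs ((fst A1 - fst A3) * (snd A2 - snd A3) - (snd A1 - snd A3) * (fst A2 - fst A3)) = Rabs D.
  f_equal; rewrite /D; ring.
rewrite e2 in s2E; rewrite e3 in s3E.
have L1 := seglen_sq A2 A3; have L2 := seglen_sq A1 A3; have L3 := seglen_sq A1 A2.
apply: (main_abstract q2 p2 p1 hnc s1E).
- by rewrite s2E Rmult_comm.
- by rewrite s3E Rmult_comm.
- rewrite c1E L1 L2 L3; field; lra.
- rewrite c2E L1 L2 L3; field; lra.
- rewrite c3E L1 L2 L3; field; lra.
Qed.
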